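(* Let $\mathbb K$ be a field, $n\ge2$, and $\mathcal G_n$, $\mathcal N_{0,n}$, $U_m(z_g)$ as in the context. If $f\in A_{\mathbb K}(\mathcal G_n)$, then there is $m\ge1$ such that, with $U_m=\bigcup_{g\in\mathcal N_{0,n}}U_m(z_g)$, the restriction $f|_{U_m}$ is a $\mathbb K$-linear combination of the characteristic functions $1_{U_m(z_g)}$, $g\in\mathcal N_{0,n}$.
   Context: Let $X=\{\mathbf 0,\mathbf 1\}$, $X^*$ the finite words (with empty word $\varnothing$), $X^\omega$ the infinite words, $C(\eta)=\{\eta w:w\in X^\omega\}$, $\mathbf 1^m$ and $\mathbf 1^\infty$ the finite/infinite words of ones. Fix $n\ge2$, a primitive polynomial $f_n$ of degree $n$ over $\mathbb F_2$ with root $\alpha$, and $\operatorname{Tr}(\beta)=\beta+\beta^2+\dots+\beta^{2^{n-1}}\in\mathbb F_2$. $\mathfrak G_n$ is the group of automorphisms of the binary rooted tree $X^*$ generated by $a$ ($a\cdot(\mathbf 0w)=\mathbf 1w$, $a\cdot(\mathbf 1w)=\mathbf 0w$) and $\iota_n(\beta)$, $\beta\in\mathbb F_{2^n}$, where $\iota_n(\beta)\cdot(\mathbf 0w)=\mathbf 0(a^{\operatorname{Tr}(\beta)}\cdot w)$, $\iota_n(\beta)\cdot(\mathbf 1w)=\mathbf 1(\iota_n(\alpha\beta)\cdot w)$; restrictions $g|_x$ are given by $g\cdot(xw)=(g\cdot x)(g|_x\cdot w)$. $\mathcal N_{0,n}=\iota_n(\mathbb F_{2^n})$. $\mathcal G_n$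 is the groupoid of germs of the action of the inverse semigroup $\{(\eta,g,\mu)\}\cup\{0\}$ on $X^\omega$ with $(\eta,g,\mu):C(\mu)\to C(\eta)$, $\mu w\mapsto\eta(g\cdot w)$; germs $[(\eta,g,\mu),w]$, $w\in C(\mu)$, with $[(\eta,g,\mu),w]=[(\eta',g',\mu'),w']$ iff $w=w'$ and some finite prefix $\nu=\mu\epsilon=\mu'\epsilon'$ of $w$ satisfies $\eta(g\cdot\epsilon)=\eta'(g'\cdot\epsilon')$ and $g|_\epsilon=g'|_{\epsilon'}$. $\Theta(s,U)=\{[s,w]:w\in U\}$ for $s=(\eta,g,\mu)$, $U\subseteq C(\mu)$ open; these form a basis of the topology. $z_g=[(\varnothing,g,\varnothing),\mathbf 1^\infty]$ and $U_m(z_g)=\Theta((\varnothing,g,\varnothing),C(\mathbf 1^m))$. $A_{\mathbb K}(\mathcal G_n)$ is the Steinberg algebra: the $\mathbb K$-span of characteristic functions of compact open bisections of $\mathcal G_n$. *)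

(* Defs.v *)
From HB Require Import structures.
From mathcomp Require Import all_boot all_order all_algebra all_field.
From mathcomp Require Import boolp.
From Stdlib Require List.
Set Implicit Arguments. Unset Strict Implicit. Unset Printing Implicit Defensive.
Import GRing.Theory.
Local Open Scope ring_scope.

(* Letters: 0 = false, 1 = true.  Finite words X^* = seq bool,
   infinite words X^omega = nat -> bool. *)

Definition iword := nat -> bool.

Definition cyl (nu : seq bool) (w : iword) : Prop :=
  forall i, (i < size nu)%N -> w i = nth false nu i.

Definition iopen (U : iword -> Prop) : Prop :=
  forall w, U w -> exists k, forall w', (forall i, (i < k)%N -> w' i = w i) -> U w'.

Definition act_a (w : seq bool) : seq bool :=
  if w is b :: w' then (~~ b) :: w' else [::].

Section Gn.
Variables (F : finFieldType) (n : nat) (alpha : F).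

Definition Tr (beta : F) : F := \sum_(i < n) beta ^+ (2 ^ i).

Fixpoint iota_act (beta : F) (w : seq bool) : seq bool :=
  match w with
  | [::] => [::]
  | false :: w' => false :: (if Tr beta == 1 then act_a w' else w')
  | true :: w' => true :: iota_act (alpha * beta) w'
  end.

Inductive InG : (seq bool -> seq bool) -> Prop :=
  | InG_id : InG id
  | InG_a : InG act_a
  | InG_iota beta : InG (iota_act beta)
  | InG_comp g h : InG g -> InG h -> InG (fun w => g (h w))
  | InG_inv g h : InG g -> cancel g h -> cancel h g -> InG h.

End Gn.

Definition restr (g : seq bool -> seq bool) (x : seq bool) : seq bool -> seq bool :=
  fun v => drop (size x) (g (x ++ v)).

(* action of a (length- and prefix-preserving) tree map on infinite words *)
Definition iact (g : seq bool -> seq bool) (w : iword) : iword :=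
  fun i => nth false (g (mkseq w i.+1)) i.

(* raw representative of a germ [(eta, g, mu), w] *)
Record Rep := MkRep { r_eta : seq bool; r_g : seq bool -> seq bool;
                      r_mu : seq bool; r_w : iword }.

Definition germ_eq (r r' : Rep) : Prop :=
  (forall i, r_w r i = r_w r' i) /\
  exists e e' : seq bool,
    [/\ r_mu r ++ e = r_mu r' ++ e',
        cyl (r_mu r ++ e) (r_w r),
        r_eta r ++ r_g r e = r_eta r' ++ r_g r' e' &
        forall v, restr (r_g r) e v = restr (r_g r') e' v].

Definition src (r : Rep) : iword := r_w r.
Definition rng (r : Rep) : iword :=
  fun i => if (i < size (r_eta r))%N then nth false (r_eta r) i
           else iact (r_g r) (fun j => r_w r (j + size (r_mu r))%N)
                     (i - size (r_eta r))%N.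

Section Groupoid.
Variables (F : finFieldType) (n : nat) (alpha : F).

Definition wf (r : Rep) : Prop := InG n alpha (r_g r) /\ cyl (r_mu r) (r_w r).

(* sets of germs are predicates on representatives (restricted to wf ones) *)
Definition Theta (eta : seq bool) (g : seq bool -> seq bool) (mu : seq bool)
  (U : iword -> Prop) (r : Rep) : Prop :=
  exists w, [/\ U w, cyl mu w & germ_eq r (MkRep eta g mu w)].

Definition gopen (O : Rep -> Prop) : Prop :=
  forall r, wf r -> O r ->
    exists eta g mu (U : iword -> Prop),
      [/\ InG n alpha g, iopen U, (forall w, U w -> cyl mu w),
          Theta eta g mu U r &
          forall r', wf r' -> Theta eta g mu U r' -> O r'].

Definition gcompact (B : Rep -> Prop) : Prop :=
  forall Cov : (Rep -> Prop) -> Prop,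
    (forall O, Cov O -> gopen O) ->
    (forall r, wf r -> B r -> exists2 O, Cov O & O r) ->
    exists s : seq (Rep -> Prop),
      (forall O, List.In O s -> Cov O) /\
      (forall r, wf r -> B r -> exists2 O, List.In O s & O r).

Definition bisection (B : Rep -> Prop) : Prop :=
  forall r r', wf r -> wf r' -> B r -> B r' ->
    ((forall i, src r i = src r' i) -> germ_eq r r') /\
    ((forall i, rng r i = rng r' i) -> germ_eq r r').

Definition cobis (B : Rep -> Prop) : Prop := [/\ gopen B, gcompact B & bisection B].

Definition chi (K : fieldType) (B : Rep -> Prop) (r : Rep) : K :=
  if `[< B r >] then 1 else 0.

Definition steinberg (K : fieldType) (f : Rep -> K) : Prop :=
  exists s : seq (K * (Rep -> Prop)),
    (forall p, List.In p s -> cobis p.2) /\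
    forall r, wf r -> f r = \sum_(p <- s) p.1 * chi K p.2 r.

End Groupoid.

Definition ones (m : nat) : seq bool := nseq m true.

Definition Umz (m : nat) (g : seq bool -> seq bool) : Rep -> Prop :=
  Theta [::] g [::] (cyl (ones m)).

(* Main.v *)
Require Import Defs.
From HB Require Import structures.
From mathcomp Require Import all_boot all_order all_algebra all_field.
From mathcomp Require Import boolp zify.
From Stdlib Require Import Classical.
Import GRing.Theory.
Local Open Scope ring_scope.
Set Implicit Arguments. Unset Strict Implicit.

Section FF.
Variables (F : finFieldType) (n : nat) (hF : #|F| = (2 ^ n)%N).

Lemma two0 : (2%:R : F) = 0.
Proof. apply: pcharf0. exact: (card_finPcharP hF). Qed.

Lemma sqrD2 (a b : F) : (a + b) ^+ 2 = a ^+ 2 + b ^+ 2.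
Proof. by rewrite sqrrD -mulr_natr two0 mulr0 addr0. Qed.

Lemma add_self (a : F) : a + a = 0.
Proof. by rewrite -mulr2n -mulr_natr two0 mulr0. Qed.

Lemma exp2D (i : nat) (a b : F) : (a + b) ^+ (2 ^ i) = a ^+ (2 ^ i) + b ^+ (2 ^ i).
Proof.
elim: i => [|i IH]; first by rewrite !expr1.
by rewrite expnSr !exprM IH sqrD2.
Qed.

Lemma TrD (a b : F) : Tr n (a + b) = Tr n a + Tr n b.
Proof. by rewrite /Tr -big_split /=; apply: eq_bigr => i _; rewrite exp2D. Qed.

Lemma Tr0 : Tr n (0 : F) = 0.
Proof. rewrite /Tr big1 // => i _; by rewrite expr0n expn_eq0. Qed.

Lemma sqr_sum (s : seq nat) (f : nat -> F) : (\sum_(i <- s) f i) ^+ 2 = \sum_(i <- s) (f i) ^+ 2.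
Proof.
elim: s => [|x s IH]; first by rewrite !big_nil expr0n.
by rewrite !big_cons sqrD2 IH.
Qed.

Lemma Tr_sq (a : F) : Tr n a ^+ 2 = Tr n a.
Proof.
rewrite /Tr.
have -> : (\sum_(i < n) a ^+ (2 ^ i)) ^+ 2 = \sum_(i < n) a ^+ (2 ^ i.+1).
  rewrite -(big_mkord xpredT (fun i => a ^+ (2 ^ i))) sqr_sum big_mkord.
  by apply: eq_bigr => i _; rewrite -exprM -expnSr.
case: n hF => [|m] hF'; first by rewrite !big_ord0.
rewrite big_ord_recr big_ord_recl /= -hF' expf_card expn0 expr1 addrC.
by [].
Qed.

Lemma Tr01 (a : F) : Tr n a = 0 \/ Tr n a = 1.
Proof.
have := Tr_sq a; rewrite expr2 => h.
have : Tr n a * (Tr n a - 1) = 0 by rewrite mulrBr mulr1 h subrr.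
by move/eqP; rewrite mulf_eq0 subr_eq0 => /orP [/eqP ->|/eqP ->]; [left|right].
Qed.

Lemma TrD1 (a b : F) : (Tr n (a + b) == 1) = (Tr n a == 1) (+) (Tr n b == 1).
Proof.
rewrite TrD.
have o : (1 : F) != 0 := oner_neq0 _.
case: (Tr01 a) => ->; case: (Tr01 b) => ->;
rewrite ?addr0 ?add0r ?eqxx ?add_self /= ?(negbTE o) ?(eq_sym 0 1) ?(negbTE o) //.
Qed.
End FF.

Definition pp (g : seq bool -> seq bool) :=
  (forall x, size (g x) = size x) /\ (forall x y, g (x ++ y) = g x ++ restr g x y).

Lemma restr_nil g : restr g [::] = g.
Proof. by apply/funext => v; rewrite /restr drop0. Qed.

Lemma restr_cat g x y : restr g (x ++ y) = restr (restr g x) y.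
Proof. by apply/funext => v; rewrite /restr drop_drop size_cat catA addnC. Qed.

Lemma restr_comp g h x : pp h ->
  restr (fun w => g (h w)) x = (fun v => restr g (h x) (restr h x v)).
Proof. by move=> [hs hc]; apply/funext => v; rewrite {1}/restr hc /restr hs. Qed.

Lemma act_aK w : act_a (act_a w) = w.
Proof. by case: w => //= b w; rewrite negbK. Qed.

Lemma pp_id : pp id.
Proof. by split=> // x y; rewrite /restr drop_size_cat. Qed.

Lemma pp_a : pp act_a.
Proof.
split; first by case.
case=> [|b x] y; first by rewrite /restr drop0.
by rewrite /restr /= drop_size_cat.
Qed.

Lemma pp_comp g h : pp g -> pp h -> pp (fun w => g (h w)).
Proof.
move=> [gs gc] [hs hc]; split=> [x|x y]; first by rewrite gs hs.
by rewrite (restr_comp g x (conj hs hc)) hc gc.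
Qed.

Lemma pp_inv g h : pp g -> cancel g h -> cancel h g -> pp h.
Proof.
move=> [gs gc] gh hg.
have hs : forall x, size (h x) = size x by move=> x; rewrite -{2}(hg x) gs.
split=> // x y.
set z := h (x ++ y).
have ez : z = take (size x) z ++ drop (size x) z by rewrite cat_take_drop.
have sz : size (take (size x) z) = size x.
  by rewrite size_take /z hs size_cat; case: ltnP => //; lia.
have : g z = x ++ y by rewrite /z hg.
rewrite {1}ez gc => e.
have : take (size x) (g (take (size x) z) ++ restr g (take (size x) z) (drop (size x) z))
   = take (size x) (x ++ y) by rewrite e.
rewrite !take_size_cat ?gs // => e2.
have ht : take (size x) z = h x by rewrite -{2}e2 gh.
move: ez; rewrite /restr -/z ht => ez.
exact: ez.
Qed.

Lemma pp_of_take g : (forall x, size (g x) = size x) ->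
  (forall x y, take (size x) (g (x ++ y)) = g x) -> pp g.
Proof.
move=> gs gt; split=> // x y.
by rewrite /restr -{1}(cat_take_drop (size x) (g (x ++ y))) gt.
Qed.

Lemma pp_take g x y : pp g -> take (size x) (g (x ++ y)) = g x.
Proof. by case=> gs gc; rewrite gc -(gs x) take_size_cat. Qed.

Section Iota.
Variables (F : finFieldType) (n : nat) (hF : #|F| = (2 ^ n)%N) (alpha : F).
Local Notation iota := (iota_act n alpha).

Lemma iota_size b x : size (iota b x) = size x.
Proof.
elim: x b => [|c x IH] b //=.
by case: c => /=; rewrite ?IH //; case: (Tr n b == 1) => //; case: x {IH}.
Qed.

Lemma pp_iota b : pp (iota b).
Proof.
apply: pp_of_take; first exact: iota_size.
move=> x y; elim: x b => [|c x IH] b /=; first by rewrite take0.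
case: c => /=; first by rewrite IH.
case: (Tr n b == 1) => //=; last by rewrite take_size_cat.
by rewrite (pp_take _ _ pp_a).
Qed.

Lemma iota_ones b M : iota b (nseq M true) = nseq M true.
Proof. by elim: M b => [|M IH] b //=; rewrite IH. Qed.

Lemma restr_iota_true b : restr (iota b) [:: true] = iota (alpha * b).
Proof. by apply/funext => v; rewrite /restr /= drop0. Qed.

Lemma restr_iota_false b :
  restr (iota b) [:: false] = if Tr n b == 1 then act_a else id.
Proof. by apply/funext => v; rewrite /restr /= drop0; case: ifP. Qed.

Lemma restr_iota_ones b M : restr (iota b) (nseq M true) = iota (alpha ^+ M * b).
Proof.
elim: M b => [|M IH] b; first by rewrite restr_nil expr0 mul1r.
change (nseq M.+1 true) with ([:: true] ++ nseq M true).
rewrite restr_cat restr_iota_true IH exprSr mulrA.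
done.
Qed.

Lemma iota0 : iota 0 = id.
Proof.
apply/funext => x; elim: x => [|c x IH] //=.
case: c; first by rewrite mulr0 IH.
by rewrite Tr0 eq_sym oner_eq0.
Qed.

Lemma iota_add g g' w : iota g (iota g' w) = iota (g + g') w.
Proof.
elim: w g g' => [|c w IH] g g' //=.
case: c => /=; first by rewrite IH mulrDr.
rewrite (TrD1 hF).
by case: (Tr n g == 1); case: (Tr n g' == 1) => //=; rewrite act_aK.
Qed.

Lemma iota_invol g w : iota g (iota g w) = w.
Proof. by rewrite iota_add (add_self hF) iota0. Qed.

Lemma iota_single g b : iota g [:: b] = [:: b].
Proof. by case: b => //=; case: ifP. Qed.

Lemma restr_a b : restr act_a [:: b] = id.
Proof. by apply/funext => v; rewrite /restr /= drop0. Qed.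

Lemma restr_id x : restr id x = id.
Proof. by apply/funext => v; rewrite /restr drop_size_cat. Qed.

End Iota.

Section Nuc.
Variables (F : finFieldType) (n : nat) (hF : #|F| = (2 ^ n)%N) (alpha : F).
Local Notation iota := (iota_act n alpha).

Lemma pp_InG g : InG n alpha g -> pp g.
Proof.
elim=> [|||g1 h1 _ IH1 _ IH2|g1 h1 _ IH gh hg].
- exact: pp_id.
- exact: pp_a.
- move=> b; exact: pp_iota.
- exact: pp_comp.
- exact: pp_inv IH gh hg.
Qed.

Definition nuc (e : bool) (d : F) : seq bool -> seq bool :=
  fun w => if e then act_a (iota d w) else iota d w.
Definition inN g := exists e d, g = nuc e d.
Definition inM g := (exists d, g = iota d) \/ g = act_a.

Lemma iota_inN d : inN (iota d).
Proof. by exists false, d; apply/funext. Qed.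

Lemma a_inN : inN act_a.
Proof. by exists true, 0; apply/funext => v; rewrite /nuc iota0. Qed.

Lemma id_inN : inN id.
Proof. by rewrite -(iota0 n alpha); exact: iota_inN. Qed.

Lemma inM_inN g : inM g -> inN g.
Proof. by case=> [[d ->]|->]; [exact: iota_inN|exact: a_inN]. Qed.

Lemma restr_nuc1 e d b : restr (nuc e d) [:: b] = restr (iota d) [:: b].
Proof.
apply/funext => v; rewrite /restr /nuc.
by case: e => //=; case: b.
Qed.

Lemma nuc_single e d b : nuc e d [:: b] = [:: b (+) e].
Proof. by rewrite /nuc iota_single; case: e; case: b. Qed.

Lemma inM_restr1 d b : inM (restr (iota d) [:: b]).
Proof.
case: b; first by left; exists (alpha * d); rewrite restr_iota_true.
rewrite restr_iota_false; case: ifP => _; first by right.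
by left; exists 0; rewrite iota0.
Qed.

Lemma inN_restr g x : inN g -> inN (restr g x).
Proof.
elim: x g => [|b x IH] g; first by rewrite restr_nil.
move=> [e [d ->]]; rewrite -cat1s restr_cat; apply: IH.
by rewrite restr_nuc1; apply: inM_inN; apply: inM_restr1.
Qed.

Lemma pp_inM p : inM p -> pp p.
Proof. by case=> [[d ->]|->]; [exact: pp_iota|exact: pp_a]. Qed.

Lemma eta_inN (p : seq bool -> seq bool) : inN p -> inN (fun v => p v).
Proof. done. Qed.

Lemma inM_comp p q c : inM p -> inM q -> inN (restr (fun w => p (q w)) [:: c]).
Proof.
move=> hp hq; rewrite restr_comp; last exact: pp_inM.
case: hq => [[d' ->]|->].
  rewrite iota_single.
  case: hp => [[d ->]|->]; last first.
    by rewrite restr_a; apply: inM_inN; apply: inM_restr1.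
  case: c.
    rewrite !restr_iota_true; exists false, (alpha * d + alpha * d').
    by apply/funext => v; rewrite /nuc (iota_add hF).
  rewrite !restr_iota_false.
  case: (Tr n d == 1); case: (Tr n d' == 1).
  - exists false, 0; apply/funext => v; by rewrite /nuc iota0 act_aK.
  - exact: a_inN.
  - exact: a_inN.
  - exact: id_inN.
rewrite restr_a /=.
by case: hp => [[d ->]|->]; [apply: inM_inN; apply: inM_restr1|rewrite restr_a; exact: id_inN].
Qed.

Lemma pp_nuc e d : pp (nuc e d).
Proof.
case: e; last exact: pp_iota.
exact: (@pp_comp act_a (iota d) pp_a (pp_iota n alpha d)).
Qed.

Lemma inN_comp u v x : inN u -> inN v -> (1 < size x)%N ->
  inN (restr (fun w => u (v w)) x).
Proof.
case: x => [|b [|c x]] // [e1 [d1 ->]] [e2 [d2 ->]] _.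
rewrite -cat1s restr_cat (restr_comp _ [:: b] (pp_nuc e2 d2)).
rewrite nuc_single !restr_nuc1 (_ : c :: x = [:: c] ++ x) // restr_cat.
apply: inN_restr; apply: inM_comp; exact: inM_restr1.
Qed.

Lemma inN_inv u w : inN u -> (forall v, u (w v) = v) -> (forall v, w (u v) = v) ->
  forall b x, inN (restr w (b :: x)).
Proof.
move=> [e [d ->]]; case: e => uw wu b x.
  have -> : w = (fun v => iota d (act_a v)).
    by apply/funext => v; rewrite -{2}(uw v) /nuc act_aK (iota_invol hF).
  rewrite -cat1s restr_cat; apply: inN_restr.
  rewrite (restr_comp _ _ pp_a).
  by rewrite restr_a /=; apply: inM_inN; apply: inM_restr1.
have -> : w = iota d.
  by apply/funext => v; rewrite -{2}(uw v) /nuc (iota_invol hF).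
rewrite -cat1s restr_cat; apply: inN_restr.
by apply: inM_inN; apply: inM_restr1.
Qed.

Definition EC g := exists K, forall x, (K <= size x)%N -> inN (restr g x).

Lemma EC_InG g : InG n alpha g -> EC g.
Proof.
elim=> [|||g1 h1 Hg1 [K1 IH1] Hh1 [K2 IH2]|g1 h1 Hg1 [K IH] gh hg].
- by exists 0%N => x _; rewrite restr_id; exact: id_inN.
- by exists 0%N => x _; apply: inN_restr; exact: a_inN.
- by move=> b; exists 0%N => x _; apply: inN_restr; exact: iota_inN.
- exists (K1 + K2 + 2)%N => x hx.
  have ppg := pp_InG Hg1; have pph := pp_InG Hh1.
  rewrite -(cat_take_drop (K1 + K2) x) restr_cat (restr_comp g1 _ pph).
  have sx1 : size (take (K1 + K2) x) = (K1 + K2)%N by rewrite size_take; case: ltnP => //; lia.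
  apply: inN_comp.
  + apply: IH1; rewrite (proj1 pph) sx1; lia.
  + apply: IH2; rewrite sx1; lia.
  + rewrite size_drop; lia.
- exists K.+1 => x hx.
  have ppg := pp_InG Hg1; have pph := pp_inv ppg gh hg.
  have sx1 : size (take K x) = K by rewrite size_take; case: ltnP => //; lia.
  rewrite -(cat_take_drop K x) restr_cat.
  have : (0 < size (drop K x))%N by rewrite size_drop; lia.
  case: (drop K x) => [|b x'] hpos; first by move: hpos.
  set x1 := take K x.
  apply: (@inN_inv (restr g1 (h1 x1))).
  + apply: IH; rewrite (proj1 pph) sx1 //.
  + move=> v; have := congr1 (fun f => f v) (restr_comp g1 x1 pph).
    move=> /= <-.
    have -> : (fun w => g1 (h1 w)) = id by apply/funext => y; rewrite hg.
    by rewrite restr_id.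
  + move=> v; have := congr1 (fun f => f v) (restr_comp h1 (h1 x1) ppg).
    rewrite hg /= => <-.
    have -> : (fun w => h1 (g1 w)) = id by apply/funext => y; rewrite gh.
    by rewrite restr_id.
Qed.

End Nuc.

Definition GW (r r' : Rep) (e e' : seq bool) :=
  [/\ r_mu r ++ e = r_mu r' ++ e',
      cyl (r_mu r ++ e) (r_w r),
      r_eta r ++ r_g r e = r_eta r' ++ r_g r' e' &
      forall v, restr (r_g r) e v = restr (r_g r') e' v].

Lemma germ_eqE r r' : germ_eq r r' <-> (forall i, r_w r i = r_w r' i) /\ exists e e', GW r r' e e'.
Proof. by []. Qed.

Lemma cyl_ext s w w' : cyl s w -> (forall i, w i = w' i) -> cyl s w'.
Proof. by move=> h e i hi; rewrite -e h. Qed.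

Lemma germ_sym r r' : germ_eq r r' -> germ_eq r' r.
Proof.
move=> [hw [e [e' [h1 h2 h3 h4]]]]; split=> [i|]; first by rewrite hw.
exists e', e; split=> //; first by rewrite -h1; exact: cyl_ext h2 hw.
Qed.

Lemma restr_restr_eq g g' e e' d v :
  (forall v, restr g e v = restr g' e' v) -> restr g (e ++ d) v = restr g' (e' ++ d) v.
Proof.
move=> h; rewrite !restr_cat.
have E : forall f, restr f d v = drop (size d) (f (d ++ v)) by [].
by rewrite !E h.
Qed.

Lemma GW_ext r r' e e' d : pp (r_g r) -> pp (r_g r') -> GW r r' e e' ->
  cyl (r_mu r ++ (e ++ d)) (r_w r) -> GW r r' (e ++ d) (e' ++ d).
Proof.
move=> [_ c1] [_ c2] [h1 h2 h3 h4] hc; split=> //.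
- by rewrite !catA h1.
- by rewrite c1 c2 !catA h3 h4.
- by move=> v; apply: restr_restr_eq.
Qed.

Lemma cyl_prefix a b w : cyl a w -> cyl b w -> (size a <= size b)%N ->
  b = a ++ drop (size a) b.
Proof.
move=> ha hb hab.
suff E : take (size a) b = a by rewrite -{1}(cat_take_drop (size a) b) E.
apply: (@eq_from_nth _ false); first by rewrite size_take; case: ltnP => //; lia.
move=> i hi.
have hi' : (i < size a)%N by move: hi; rewrite size_take; case: (ltnP (size a) (size b)) => h1 h2; lia.
rewrite nth_take // -ha // hb //; lia.
Qed.

Lemma germ_trans r1 r2 r3 : pp (r_g r1) -> pp (r_g r2) -> pp (r_g r3) ->
  germ_eq r1 r2 -> germ_eq r2 r3 -> germ_eq r1 r3.
Proof.
move=> p1 p2 p3 [w12 [e1 [e2 G12]]] [w23 [f2 [f3 G23]]].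
split=> [i|]; first by rewrite w12 w23.
have cP : cyl (r_mu r2 ++ e2) (r_w r2).
  by case: G12 => h1 h2 _ _; rewrite -h1; exact: cyl_ext h2 w12.
have cQ : cyl (r_mu r2 ++ f2) (r_w r2) by case: G23.
case: (leqP (size e2) (size f2)) => hs.
  have := cyl_prefix cP cQ; rewrite !size_cat leq_add2l => /(_ hs).
  set D := drop _ _; rewrite -catA => /eqP; rewrite eqseq_cat // eqxx /= => /eqP ef.
  exists (e1 ++ D), f3.
  have cc : cyl (r_mu r1 ++ (e1 ++ D)) (r_w r1).
    case: G12 => h1 _ _ _; rewrite catA h1 -catA -ef.
    apply: cyl_ext cQ _ => i; by rewrite w12.
  case: (GW_ext p1 p2 G12 cc) => h1 h2 h3 h4; case: G23 => k1 k2 k3 k4.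
  rewrite ef in k1 k3 k4; split=> //.
  - by rewrite h1.
  - by rewrite h3.
  - by move=> v; rewrite h4.
have hs' : (size f2 <= size e2)%N by apply: ltnW.
have := cyl_prefix cQ cP; rewrite !size_cat leq_add2l => /(_ hs').
set D := drop _ _; rewrite -catA => /eqP; rewrite eqseq_cat // eqxx /= => /eqP ef.
have cc : cyl (r_mu r2 ++ (f2 ++ D)) (r_w r2) by rewrite -ef.
case: (GW_ext p2 p3 G23 cc) => k1 k2 k3 k4; case: G12 => h1 h2 h3 h4.
rewrite -ef in k1 k3 k4.
exists e1, (f3 ++ D); split=> //.
- by rewrite h1.
- by rewrite h3.
- by move=> v; rewrite h4.
Qed.

Definition one_w : iword := fun _ => true.

Lemma cyl_onesP M w : cyl (ones M) w <-> forall i, (i < M)%N -> w i = true.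
Proof.
rewrite /cyl /ones size_nseq; split=> h i hi; have := h i hi; by rewrite nth_nseq hi.
Qed.

Lemma cyl_ones_le M M' w : (M <= M')%N -> cyl (ones M') w -> cyl (ones M) w.
Proof. by move=> hm /cyl_onesP h; apply/cyl_onesP => i hi; apply: h; lia. Qed.

Lemma cyl_all_ones s M w : cyl s w -> cyl (ones M) w -> (size s <= M)%N -> s = ones (size s).
Proof.
move=> hs /cyl_onesP hm hl; apply: (@eq_from_nth _ false); first by rewrite size_nseq.
by move=> i hi; rewrite nth_nseq hi -hs // hm //; lia.
Qed.

Lemma cyl_one_w s : s = ones (size s) -> cyl s one_w.
Proof. by move=> -> ; apply/cyl_onesP. Qed.

Lemma cyl_extend e w k : cyl e w -> cyl (e ++ mkseq (fun i => w (size e + i)%N) k) w.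
Proof.
move=> h i; rewrite size_cat size_mkseq nth_cat => hi.
case: ltnP => hie; first by apply: h.
rewrite nth_mkseq; last lia.
by congr w; lia.
Qed.

Section KL.
Variables (F : finFieldType) (n : nat) (hF : #|F| = (2 ^ n)%N) (alpha : F).
Hypothesis anz : alpha != 0.
Local Notation iota := (iota_act n alpha).

Lemma KL eta g mu nu beta : InG n alpha g -> (forall w, cyl nu w -> cyl mu w) ->
  (forall M, exists w, [/\ cyl nu w, cyl (ones M) w &
     germ_eq (MkRep [::] (iota beta) [::] w) (MkRep eta g mu w)]) ->
  exists gam, cyl nu one_w /\ germ_eq (MkRep [::] (iota gam) [::] one_w) (MkRep eta g mu one_w).
Proof.
move=> Hg hnm H.
have [gs gc] := pp_InG Hg.
have [K HK] := EC_InG hF Hg.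
set p := size mu.
set M := (size nu + p + K)%N.
have [w [hnu hM [_ [e [e' G]]]]] := H M.
have hmu := hnm _ hnu.
have enu : nu = ones (size nu) by apply: cyl_all_ones hnu hM _; rewrite /M; lia.
have emu : mu = ones p by apply: cyl_all_ones hmu hM _; rewrite /M /p; lia.
set D := mkseq (fun i => w (size e + i)%N) M.+1.
have G' := @GW_ext (MkRep [::] (iota beta) [::] w) (MkRep eta g mu w) e e' D (pp_iota n alpha beta) (conj gs gc) G (@cyl_extend e w M.+1 (let: And4 _ x _ _ := G in x)).
set E := e ++ D in G'; set E' := e' ++ D in G'.
case: G' => /= h1 h2 h3 _.
have sE : (M < size E)%N by rewrite /E size_cat size_mkseq; lia.
have hEM := cyl_prefix hM h2; rewrite size_nseq in hEM; have {hEM} hEM := hEM (ltnW sE).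
set d := drop M E in hEM.
have sd : (0 < size d)%N by rewrite /d size_drop; lia.
set q := (M - p)%N.
have eM : ones M = ones p ++ ones q by rewrite /ones -nseqD; congr nseq; rewrite /q /M; lia.
have eE' : E' = ones q ++ d.
  move: h1; rewrite hEM eM emu -catA => /eqP; rewrite eqseq_cat ?size_nseq // eqxx /=.
  by move/eqP.
have seta : size eta = p.
  move: (congr1 size h3) (congr1 size h1); rewrite iota_size size_cat gs size_cat /p; lia.
move: h3; rewrite hEM eE' (proj2 (pp_iota n alpha beta)) iota_ones gc restr_iota_ones catA.
move=> /eqP; rewrite eqseq_cat; last first.
  by rewrite size_cat gs !size_nseq seta /q; lia.
move=> /andP [/eqP h3a /eqP h3b].
have [e0 [del hdel]] : inN n alpha (restr g (ones q)) by apply: HK; rewrite size_nseq /q /M; lia.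
have e0f : e0 = false.
  move: h3b; rewrite hdel; clear -sd; clearbody d; case: d sd => [|b d'] // _.
  rewrite /nuc; case: e0 => //; case: b => /=; by case.
exists (del / alpha ^+ M); split; first exact: cyl_one_w.
split=> // ; exists (ones M), (ones q); split => /=.
- by rewrite eM emu.
- by apply/cyl_onesP.
- by rewrite iota_ones h3a.
- move=> v; rewrite restr_iota_ones hdel e0f mulrC divfK //; exact: expf_neq0.
Qed.
End KL.

Lemma bound_list (A : Type) (l : list A) (P : A -> nat -> Prop) :
  (forall a M M', (M <= M')%N -> P a M -> P a M') ->
  (forall a, List.In a l -> exists M, P a M) -> exists M, forall a, List.In a l -> P a M.
Proof.
move=> mono; elim: l => [|x l IH] H; first by exists 0%N.
have [M1 h1] := H x (or_introl erefl).
have [M2 h2] := IH (fun a ha => H a (or_intror ha)).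
exists (M1 + M2)%N => a [<-|ha]; first by apply: mono h1; lia.
by apply: mono (h2 a ha); lia.
Qed.

Lemma bound_fin (T : finType) (P : T -> nat -> Prop) :
  (forall a M M', (M <= M')%N -> P a M -> P a M') ->
  (forall a, exists M, P a M) -> exists M, forall a, P a M.
Proof.
move=> mono H.
suff [M hM] : exists M, forall a, a \in enum T -> P a M.
  by exists M => a; apply: hM; rewrite mem_enum.
elim: (enum T) => [|x l [M2 h2]]; first by exists 0%N.
have [M1 h1] := H x.
exists (M1 + M2)%N => a; rewrite in_cons => /orP [/eqP ->|ha].
  by apply: mono h1; lia.
by apply: mono (h2 a ha); lia.
Qed.

Lemma Umz_mono M M' g r : (M <= M')%N -> Umz M' g r -> Umz M g r.
Proof.
move=> hm [w [h1 h2 h3]]; exists w; split=> //; exact: cyl_ones_le h1.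
Qed.

Lemma cyl_catl a b w : cyl (a ++ b) w -> cyl a w.
Proof. by move=> h i hi; rewrite h ?nth_cat ?hi // size_cat; lia. Qed.

Section Main.
Variables (F : finFieldType) (n : nat) (hF : #|F| = (2 ^ n)%N) (alpha : F).
Hypothesis anz : alpha != 0.
Local Notation iota := (iota_act n alpha).
Local Notation wf := (wf n alpha).

Definition zr (b : F) := MkRep [::] (iota b) [::] one_w.

Lemma wf_iota b w : wf (MkRep [::] (iota b) [::] w).
Proof. by split=> //; constructor. Qed.

Lemma caseA B b0 : cobis n alpha B -> B (zr b0) ->
  exists m, (1 <= m)%N /\ forall m', (m <= m')%N -> forall r, wf r ->
    (exists b, Umz m' (iota b) r) -> (B r <-> Umz m' (iota b0) r).
Proof.
move=> [Bo Bc Bb] Bz.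
have [eta [g [mu [U [Hg Uo Umu [w0 [Uw0 cmw0 [hw [e [e' [h1 h2 h3 h4]]]]]] Hsub]]]]] :=
  Bo _ (wf_iota b0 one_w) Bz.
simpl in h1, h2, h3, h4, hw.
have [k hk] := Uo w0 Uw0.
have ee : e = ones (size e).
  apply: (@eq_from_nth _ false); first by rewrite size_nseq.
  by move=> i hi; rewrite nth_nseq hi -h2.
set m := (k + size e + 1)%N.
have C : forall w, cyl (ones m) w ->
    germ_eq (MkRep [::] (iota b0) [::] w) (MkRep eta g mu w) /\
    Theta eta g mu U (MkRep [::] (iota b0) [::] w).
  move=> w hw'.
  have ce : cyl e w by rewrite ee; apply: cyl_ones_le hw'; rewrite /m; lia.
  have G : germ_eq (MkRep [::] (iota b0) [::] w) (MkRep eta g mu w).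
    by split=> //; exists e, e'; split.
  split=> //; exists w; split=> //.
  - apply: hk => i hi; rewrite -hw; move/cyl_onesP: hw'; apply; rewrite /m; lia.
  - by apply: (@cyl_catl mu e'); rewrite -h1.
exists m; split; first by rewrite /m; lia.
move=> m' hm' r wfr [b [w [cw _ Gr]]].
have ppr : pp (r_g r) by case: wfr => Hg0 _; exact: pp_InG Hg0.
have cw' : cyl (ones m) w by apply: cyl_ones_le cw.
have [C1 C2] := C w cw'.
split=> [Br|[w' [cw2 _ Gr2]]].
  have Br' : B (MkRep [::] (iota b0) [::] w) by apply: Hsub => //; exact: wf_iota.
  have [hsrc _] := Bb _ _ wfr (wf_iota b0 w) Br Br'.
  exists w; split=> //; apply: hsrc => i /=; by case: Gr.
have [C1' _] := C w' (cyl_ones_le hm' cw2).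
apply: Hsub => //; exists w'; split.
- apply: hk => i hi; rewrite -hw; apply: (proj1 (cyl_onesP _ _) cw2); rewrite /m in hm'; lia.
- apply: (@cyl_catl mu e'); rewrite -h1 ee; apply: cyl_ones_le cw2; rewrite /m in hm'; lia.
- exact: (@germ_trans r (MkRep [::] (iota b0) [::] w') (MkRep eta g mu w') ppr (pp_iota n alpha b0) (pp_InG Hg) Gr2 C1').
Qed.



Lemma caseB B : cobis n alpha B -> (forall b, ~ B (zr b)) ->
  exists m, forall r, wf r -> (exists b, Umz m (iota b) r) -> ~ B r.
Proof.
move=> [Bo Bc Bb] nz.
apply: NNPP => Hn.
have Hall : forall m, exists r, [/\ wf r, exists b, Umz m (iota b) r & B r].
  move=> m; apply: NNPP => h; apply: Hn; exists m => r wfr hb Br; apply: h.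
  by exists r.
pose Cov (O : Rep -> Prop) := exists eta g mu nu,
  [/\ O = Theta eta g mu (cyl nu), InG n alpha g, (forall w, cyl nu w -> cyl mu w) &
      (forall r', wf r' -> Theta eta g mu (cyl nu) r' -> B r')].
have hopen : forall O, Cov O -> gopen n alpha O.
  move=> O [eta [g [mu [nu [-> Hg Hnm Hsub]]]]] r wfr HT.
  exists eta, g, mu, (cyl nu); split=> //.
  move=> w hw; exists (size nu) => w' hw' i hi; rewrite hw' // hw //.
have hcover : forall r, wf r -> B r -> exists2 O, Cov O & O r.
  move=> r wfr Br.
  have [eta [g [mu [U [Hg Uo Umu [w [Uw cmw G]] Hsub]]]]] := Bo r wfr Br.
  have [k hk] := Uo w Uw.
  pose nu := mkseq w (k + size mu).
  have cnu : cyl nu w by move=> i; rewrite size_mkseq => hi; rewrite nth_mkseq.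
  exists (Theta eta g mu (cyl nu)); last by exists w; split.
  exists eta, g, mu, nu; split=> //.
    move=> w' hw' i hi; rewrite hw'; last by rewrite size_mkseq; lia.
    by rewrite nth_mkseq; [exact: cmw | lia].
  move=> r' wfr' [w' [cw' cm' G']]; apply: Hsub => //; exists w'; split=> //.
  apply: hk => i hi; rewrite cw'; last by rewrite size_mkseq; lia.
  by rewrite nth_mkseq //; lia.
have [s [hs1 hs2]] := Bc Cov hopen hcover.
have [O [Os [b HI]]] : exists O, List.In O s /\ exists b, forall M, exists r,
    [/\ wf r, O r & Umz M (iota b) r].
  apply: NNPP => hneg.
  have HP : forall O, List.In O s -> exists M, forall b r, wf r -> O r -> ~ Umz M (iota b) r.
    move=> O Os.
    have := @bound_fin F (fun b M => forall r, wf r -> O r -> ~ Umz M (iota b) r).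
    case.
    - move=> b0 M M' hMM' h r wfr Or hU; apply: h wfr Or (Umz_mono hMM' hU).
    - move=> b0; apply: NNPP => hb; apply: hneg; exists O; split=> //; exists b0 => M.
      apply: NNPP => hM; apply: hb; exists M => r wfr Or hU; apply: hM; by exists r.
    by move=> M hM; exists M => b0; apply: hM.
  have [M0 hM0] := @bound_list (Rep -> Prop) s
    (fun (O : Rep -> Prop) (M : nat) => forall b r, wf r -> O r -> ~ Umz M (iota b) r)
    (fun O M M' hMM' h b0 r wfr Or hU => h b0 r wfr Or (Umz_mono hMM' hU)) HP.
  have [r [wfr [b0 hU] Br]] := Hall M0.
  have [O Os Or] := hs2 r wfr Br.
  exact: (hM0 O Os b0 r wfr Or hU).
have [eta [g [mu [nu [EO Hg Hnm Hsub]]]]] := hs1 O Os.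
subst O.
have := @KL F n hF alpha anz eta g mu nu b Hg Hnm.
case.
  move=> M; have [r [wfr [w1 [cnw1 cmw1 G1]] [w2 [cw2 _ G2]]]] := HI M.
  have ew : w1 = w2.
    apply/funext => i; case: G1 => h1 _; case: G2 => h2 _.
    by move: (h1 i) (h2 i) => /= <- <-.
  subst w2; exists w1; split=> //.
  have ppr : pp (r_g r) by case: wfr => Hg0 _; exact: pp_InG Hg0.
  exact: (@germ_trans (MkRep [::] (iota b) [::] w1) r (MkRep eta g mu w1)
            (pp_iota n alpha b) ppr (pp_InG Hg) (germ_sym G2) G1).
move=> gam [cnu G]; apply: (nz gam); apply: Hsub; first exact: wf_iota.
by exists one_w; split => //; apply: Hnm.
Qed.

Lemma single (K : fieldType) B : cobis n alpha B ->
  exists m, (1 <= m)%N /\ exists c : F -> K, forall m', (m <= m')%N -> forall r, wf r ->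
    (exists b, Umz m' (iota b) r) ->
    chi K B r = \sum_(b : F) c b * chi K (Umz m' (iota b)) r.
Proof.
move=> hB.
case: (classic (exists b0, B (zr b0))) => [[b0 Bz]|nz].
  have [m [m1 H]] := caseA hB Bz.
  exists m; split=> //; exists (fun b => if b == b0 then 1 else 0) => m' hm' r wfr hr.
  rewrite (bigD1 b0) //= eqxx mul1r big1 ?addr0; last first.
    by move=> b /negbTE ->; rewrite mul0r.
  have [h1 h2] := H m' hm' r wfr hr.
  rewrite /chi; case: (asboolP (B r)) => hb; case: (asboolP (Umz m' (iota b0) r)) => hu //.
  - by case: hu; apply: h1.
  - by case: hb; apply: h2.
have [m H] := caseB hB (fun b hb => nz (ex_intro _ b hb)).
exists (m + 1)%N; split; first lia.
exists (fun _ => 0) => m' hm' r wfr [b hb].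
rewrite big1; last by move=> i _; rewrite mul0r.
rewrite /chi; case: (asboolP (B r)) => // Br.
case: (H r wfr (ex_intro _ b (Umz_mono (_ : (m <= m')%N) hb)) Br); lia.
Qed.

Lemma combine (K : fieldType) (s : seq (K * (Rep -> Prop))) :
  (forall p, List.In p s -> cobis n alpha p.2) ->
  exists m, (1 <= m)%N /\ exists c : F -> K, forall m', (m <= m')%N -> forall r, wf r ->
    (exists b, Umz m' (iota b) r) ->
    \sum_(p <- s) p.1 * chi K p.2 r = \sum_(b : F) c b * chi K (Umz m' (iota b)) r.
Proof.
elim: s => [|p s IH] hs.
  exists 1%N; split=> //; exists (fun _ => 0) => m' _ r _ _.
  by rewrite big_nil big1 // => i _; rewrite mul0r.
have [m1 [h1 [c1 H1]]] := single K (hs p (or_introl erefl)).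
have [m2 [h2 [c2 H2]]] := IH (fun q hq => hs q (or_intror hq)).
exists (m1 + m2)%N; split; first lia.
exists (fun b => p.1 * c1 b + c2 b) => m' hm' r wfr hr.
rewrite big_cons (H1 m') //; last lia.
rewrite (H2 m') //; last lia.
rewrite mulr_sumr -big_split /=; apply: eq_bigr => b _.
by rewrite mulrDl mulrA.
Qed.

End Main.

Unset Implicit Arguments.
Set Strict Implicit.

Theorem mainTheorem9 (K : fieldType) (n : nat) (hn : (2 <= n)%N)
  (F : finFieldType) (hF : #|F| = (2 ^ n)%N)
  (alpha : F) (halpha : (2 ^ n - 1)%N.-primitive_root alpha)
  (f : Rep -> K) (hf : steinberg n alpha f) :
  exists m : nat, (1 <= m)%N /\
    exists c : F -> K,
      forall r : Rep, wf n alpha r ->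
        (exists beta : F, Umz m (iota_act n alpha beta) r) ->
        f r = \sum_(beta : F) c beta * chi K (Umz m (iota_act n alpha beta)) r.
Proof.
have anz : alpha != 0.
  have h2n : (1 < 2 ^ n)%N by rewrite -{1}(expn0 2) ltn_exp2l //; lia.
  have hp : (0 < 2 ^ n - 1)%N by lia.
  apply/eqP => a0; move: (prim_expr_order halpha); rewrite a0 expr0n eqn0Ngt hp /=.
  by move/eqP; rewrite eq_sym oner_eq0.
have [s [hs hfs]] := hf.
have [m [m1 [c H]]] := combine hF anz hs.
exists m; split=> //; exists c => r wfr hr.
by rewrite hfs // (H m).
Qed.
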